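(* Let $h,h'$ be decision trees, $i$ a leaf of $h$ and $j$ a leaf of $h'$ with $l_{h,i}\ne l_{h',j}$. Let $S$ be a finite dataset and $S_i=\{x\in S:\mathrm{LineTree}_{h,i}(x)=l_{h,i}\}$ (assumed nonempty). Then $D_{S_i}(\mathrm{LineTree}_{h,i},\mathrm{LineTree}_{h',j})\le D_{S_i}(h,h')$.
   Context: A decision tree routes a point from the root; each internal node compares one coordinate with a threshold, each leaf carries a label. For a tree $h$ and leaf $i$, $l_{h,i}\in\{0,1\}$ is the label of leaf $i$, and $\mathrm{LineTree}_{h,i}$ is the classifier assigning label $l_{h,i}$ to all inputs that reach leaf $i$ in $h$ and label $1-l_{h,i}$ to all other inputs. $D_T(f,g)=\frac1{|T|}\sum_{x\in T}\mathbb{I}(f(x)\ne g(x))$. *)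

(* Defs.v *)
From mathcomp Require Import all_boot all_order all_algebra.
Set Implicit Arguments. Unset Strict Implicit. Unset Printing Implicit Defensive.
Import Order.TTheory GRing.Theory Num.Theory.
Local Open Scope ring_scope.

(* Leaves carry a label in {0,1}, encoded as bool (false = 0, true = 1). *)
Inductive dtree (d : nat) (R : Type) : Type :=
| Leaf of bool
| Node of 'I_d & R & dtree d R & dtree d R.

Arguments Leaf {d R}.
Arguments Node {d R}.

Section DT.
Variables (R : realFieldType) (d : nat).
Implicit Types (h : dtree d R) (x : 'I_d -> R) (p : seq bool).

(* Leaves are addressed by their path from the root: false = left, true = right. *)
Fixpoint is_leaf h p : bool :=
  match h, p with
  | Leaf _, [::] => true
  | Node _ _ hl hr, b :: p' => if b then is_leaf hr p' else is_leaf hl p'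
  | _, _ => false
  end.

(* label of the leaf at address p (default false if p is not a leaf) *)
Fixpoint leaf_label h p : bool :=
  match h, p with
  | Leaf l, [::] => l
  | Node _ _ hl hr, b :: p' => if b then leaf_label hr p' else leaf_label hl p'
  | _, _ => false
  end.

Fixpoint route h x : seq bool :=
  match h with
  | Leaf _ => [::]
  | Node c t hl hr => if x c <= t then false :: route hl x else true :: route hr x
  end.

Fixpoint eval h x : bool :=
  match h with
  | Leaf l => l
  | Node c t hl hr => if x c <= t then eval hl x else eval hr x
  end.

Definition LineTree h p x : bool :=
  if route h x == p then leaf_label h p else ~~ leaf_label h p.

(* D_T(f,g) = (1/|T|) * #{x in T | f x <> g x}, T a finite dataset (a list,
   duplicates counted with multiplicity) *)
Definition Dis (T : seq ('I_d -> R)) (f g : ('I_d -> R) -> bool) : R :=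
  (size T)%:R^-1 * (\sum_(x <- T) (f x != g x)%:R).

End DT.

(* Main.v *)
Require Import Defs.
From mathcomp Require Import all_boot all_order all_algebra.
Import Order.TTheory GRing.Theory Num.Theory.
Local Open Scope ring_scope.

Lemma eval_route (R : realFieldType) (d : nat) (h : dtree d R) x :
  eval h x = leaf_label h (route h x).
Proof. by elim: h => [l|c t hl IHl hr IHr] //=; case: ifP. Qed.

Theorem lemma19 (R : realFieldType) (d : nat) (h h' : dtree d R)
  (i j : seq bool) (S : seq ('I_d -> R)) :
  is_leaf h i -> is_leaf h' j ->
  leaf_label h i != leaf_label h' j ->
  let Si := [seq x <- S | LineTree h i x == leaf_label h i] in
  (0 < size Si)%N ->
  Dis Si (LineTree h i) (LineTree h' j) <= Dis Si (eval h) (eval h').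
Proof.
move=> _ _ hne Si _; rewrite /Dis.
apply: ler_wpM2l; first by rewrite invr_ge0 ler0n.
rewrite /Si; clear Si; elim: S => [|x S IH]; first by rewrite !big_nil.
rewrite /=; case: ifP => Hx; rewrite ?big_cons //.
apply: lerD => //.
rewrite ler_nat.
move: Hx; rewrite /LineTree !eval_route.
have [Hr|Hr] := eqVneq (route h x) i; last by case: leaf_label.
move=> _; rewrite Hr.
have [Hr'|Hr'] := eqVneq (route h' x) j.
  by rewrite Hr'; move: hne; case: leaf_label; case: leaf_label.
by move: hne; case: (leaf_label h i); case: (leaf_label h' j).
Qed.
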